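(* Let $A$ be a nonempty finite set of $n$ alternatives and let $C$ be a choice rule on $A$ that is (capacity-constrained) lexicographic for a priority profile $(\succ_1,\dots,\succ_n)$. Let $A_1=A$ and, for $t\in\{2,\dots,n\}$, $A_t=A\setminus C(A,t-1)$. Then $C$ is lexicographic for another priority profile $(\succ'_1,\dots,\succ'_n)$ if and only if $\succ_1=\succ'_1$ and, for each $t\in\{1,\dots,n\}$, the restrictions of $\succ_t$ and $\succ'_t$ to $A_t$ coincide.
   Context: Let $\mathcal{A}$ be the set of all nonempty subsets of $A$. A choice rule is a map $C$ assigning to each $(S,q)\in\mathcal{A}\times\{1,\dots,n\}$ a nonempty set $C(S,q)\subseteq S$ with $|C(S,q)|\le q$. A priority ordering is a complete, transitive and antisymmetric binary relation on $A$; a priority profile is a list $(\succ_1,\dots,\succ_n)$ of $n$ priority orderings. $C$ is (capacity-constrained) lexicographic for $(\succ_1,\dots,\succ_n)$ if for every $(S,q)$, $C(S,q)$ is obtained by choosing the $\succ_1$-highest alternative in $S$, then the $\succ_2$-highest alternative among the remaining ones, and so on, until $q$ alternatives are chosen or no alternative is left. *)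

(* Defs.v *)
From mathcomp Require Import all_boot.
Set Implicit Arguments. Unset Strict Implicit. Unset Printing Implicit Defensive.

(* A priority ordering on A: complete, transitive, antisymmetric relation
   (r x y reads "x ≻ y or x = y"; completeness makes it reflexive). *)
Definition priority (A : finType) (r : rel A) : Prop :=
  [/\ (forall x y, r x y || r y x),
      (forall x y z, r x y -> r y z -> r x z) &
      (forall x y, r x y -> r y x -> x = y)].

(* A priority profile (≻_1,...,≻_n), n = #|A|; ≻_t is p (t-1). *)
Definition priority_profile (A : finType) (p : 'I_#|A| -> rel A) : Prop :=
  forall i, priority (p i).

(* Choice rule: for nonempty S and 1 <= q <= n, C S q is a nonempty subset
   of S with at most q elements (values outside this domain are irrelevant). *)
Definition choice_rule (A : finType) (C : {set A} -> nat -> {set A}) : Prop :=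
  forall (S : {set A}) (q : nat), S != set0 -> 0 < q <= #|A| ->
    [/\ C S q \subset S, C S q != set0 & #|C S q| <= q].

Definition prof_at (A : finType) (p : 'I_#|A| -> rel A) (k : nat) : rel A :=
  match insub k with Some i => p i | None => fun _ _ => true end.

Fixpoint lex_choice (A : finType) (p : 'I_#|A| -> rel A) (S : {set A})
    (k : nat) : {set A} :=
  match k with
  | 0 => set0
  | k'.+1 =>
      let X := lex_choice p S k' in
      match [pick x in S :\: X | [forall y in S :\: X, prof_at p k' x y]] with
      | Some x => x |: X
      | None => X
      end
  end.

Definition lexicographic (A : finType) (C : {set A} -> nat -> {set A})
    (p : 'I_#|A| -> rel A) : Prop :=
  forall (S : {set A}) (q : nat), S != set0 -> 0 < q <= #|A| ->
    C S q = lex_choice p S q.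

(* A_t for t = i+1: A_1 = A, A_t = A \ C(A, t-1). *)
Definition A_t (A : finType) (C : {set A} -> nat -> {set A}) (i : 'I_#|A|)
    : {set A} :=
  if val i == 0 then setT else setT :\: C setT i.

(* Main.v *)
Require Import Defs.
From mathcomp Require Import all_boot.
Set Implicit Arguments. Unset Strict Implicit. Unset Printing Implicit Defensive.

Section Lex.
Variable A : finType.
Implicit Types (p : 'I_#|A| -> rel A) (S X : {set A}).

Lemma prof_atE p k (hk : k < #|A|) : prof_at p k = p (Ordinal hk).
Proof. by rewrite /prof_at insubT. Qed.

Lemma prof_at_ord p (i : 'I_#|A|) : prof_at p i = p i.
Proof. by rewrite /prof_at valK. Qed.

Lemma prof_pri p k : priority_profile p -> k < #|A| -> priority (prof_at p k).
Proof. by move=> hp hk; rewrite (prof_atE _ hk). Qed.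

Lemma pri_refl (r : rel A) : priority r -> forall x, r x x.
Proof. by case=> t _ _ x; have := t x x; rewrite orbb. Qed.

Lemma max_seq (r : rel A) : priority r -> forall s : seq A, s != [::] ->
  exists2 m, m \in s & forall y, y \in s -> r m y.
Proof.
move=> hr; have rr := pri_refl hr; case: hr => t tr _.
elim=> [//|x s IH] _.
case: s IH => [|z s] IH.
  exists x; first by rewrite inE.
  by move=> y; rewrite inE => /eqP ->.
have [m ms Hm] := IH isT.
case rxm: (r x m).
- exists x; first by rewrite inE eqxx.
  move=> y; rewrite inE => /orP [/eqP -> //| ys].
  exact: tr rxm (Hm y ys).
- exists m; first by rewrite inE ms orbT.
  move=> y; rewrite inE => /orP [/eqP -> | ys]; last exact: Hm.
  by have := t x m; rewrite rxm.
Qed.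

Lemma max_set (r : rel A) (hr : priority r) (R : {set A}) : R != set0 ->
  exists2 m, m \in R & forall y, y \in R -> r m y.
Proof.
move=> /set0Pn [x xR].
have: enum R != [::].
  by apply/eqP=> E; have := mem_enum R x; rewrite E xR.
move=> /(max_seq hr) [m]; rewrite mem_enum => mR Hm.
by exists m => // y yR; apply: Hm; rewrite mem_enum.
Qed.

Lemma pick_max (r : rel A) (hr : priority r) (R : {set A}) m : m \in R ->
  (forall y, y \in R -> r m y) ->
  [pick x in R | [forall y in R, r x y]] = Some m.
Proof.
move=> mR Hm; case: pickP => [z /andP [zR /forall_inP Hz] | H].
  by case: hr => _ _ anti; congr Some; apply: anti (Hz _ mR) (Hm _ zR).
suff: (m \in R) && [forall y in R, r m y] by rewrite H.
by rewrite mR; apply/forall_inP.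
Qed.

Lemma lex_choiceS p S k : lex_choice p S k.+1 =
  match [pick x in S :\: lex_choice p S k |
          [forall y in S :\: lex_choice p S k, prof_at p k x y]] with
  | Some x => x |: lex_choice p S k
  | None => lex_choice p S k
  end.
Proof. by []. Qed.

Lemma lex_sub p S k : lex_choice p S k \subset lex_choice p S k.+1.
Proof. rewrite lex_choiceS; case: pickP => // x _; exact: subsetUr. Qed.

Lemma lex_mono p (hp : priority_profile p) S k : k <= #|A| ->
  S :&: lex_choice p setT k \subset lex_choice p S k.
Proof.
elim: k => [|k IH] hk; first by rewrite /= setI0 sub0set.
have hr := prof_pri hp hk.
have IH' := IH (ltnW hk).
rewrite (lex_choiceS p setT).
case: pickP => [mA /andP [mAR /forall_inP HmA] | _]; last first.
  exact: subset_trans IH' (lex_sub _ _ _).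
apply/subsetP => z /setIP [zS]; rewrite in_setU1 => /orP [/eqP zm | zXA].
- subst z.
  case mAXS: (mA \in lex_choice p S k).
    by apply: (subsetP (lex_sub _ _ _)).
  rewrite lex_choiceS (pick_max hr (m:=mA)).
  + by rewrite setU11.
  + by rewrite in_setD mAXS.
  move=> y; rewrite in_setD => /andP [yX yS]; apply: HmA.
  rewrite in_setD in_setT andbT; apply: contra yX => yXA.
  by apply: (subsetP IH'); rewrite inE yS yXA.
- apply: (subsetP (lex_sub _ _ _)); apply: (subsetP IH').
  by rewrite inE zS zXA.
Qed.

Lemma lex_sup p (hp : priority_profile p) S k : k <= #|A| ->
  lex_choice p setT k \subset S -> lex_choice p S k = lex_choice p setT k.
Proof.
elim: k => [//|k IH] hk hsub.
have hr := prof_pri hp hk.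
have hsub' := subset_trans (lex_sub _ _ _) hsub.
move: hsub; rewrite !lex_choiceS IH //; last exact: ltnW.
set X := lex_choice p setT k.
case: pickP => [mA /andP [mAR /forall_inP HmA] | HA] hsub.
  rewrite (pick_max hr (m:=mA)) //.
    move: mAR; rewrite !in_setD => /andP [-> _] /=.
    by apply: (subsetP hsub); rewrite setU11.
  move=> y; rewrite in_setD => /andP [yX _]; apply: HmA.
  by rewrite in_setD yX in_setT.
case: pickP => [z /andP [zR _] | //].
exfalso.
have [m mR Hm] : exists2 m, m \in setT :\: X &
    forall y, y \in setT :\: X -> prof_at p k m y.
  apply: (max_set hr); apply/set0Pn; exists z.
  by move: zR; rewrite !in_setD in_setT => /andP [-> _].
suff: (m \in setT :\: X) && [forall y in setT :\: X, prof_at p k m y].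
  by rewrite HA.
by rewrite mR; apply/forall_inP.
Qed.

Lemma lex_eq p p' (hp : priority_profile p) S k : k <= #|A| ->
  (forall j (hj : j < #|A|), j < k -> forall x y,
     x \in setT :\: lex_choice p setT j -> y \in setT :\: lex_choice p setT j ->
     p (Ordinal hj) x y = p' (Ordinal hj) x y) ->
  lex_choice p S k = lex_choice p' S k.
Proof.
elim: k => [//|k IH] hk H.
have {}IH := IH (ltnW hk) (fun j hj hjk => H j hj (leqW hjk)).
rewrite !lex_choiceS -IH.
set X := lex_choice p S k.
have E : [pick x in S :\: X | [forall y in S :\: X, prof_at p k x y]] =
         [pick x in S :\: X | [forall y in S :\: X, prof_at p' k x y]].
  have inA : forall x, x \in S :\: X -> x \in setT :\: lex_choice p setT k.
    move=> x; rewrite !in_setD in_setT andbT => /andP [xX xS].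
    apply: contra xX => xXA; apply: (subsetP (lex_mono hp S (ltnW hk))).
    by rewrite inE xS xXA.
  apply: eq_pick => x /=; case xR: (x \in S :\: X) => //=.
  apply/forall_inP/forall_inP => Hx y yR; have := Hx y yR;
    rewrite !(prof_atE _ hk) (H k hk (ltnSn k)) //; by apply: inA.
by rewrite E.
Qed.

End Lex.

Theorem proposition1 (A : finType) (hA : 0 < #|A|)
    (C : {set A} -> nat -> {set A}) (p : 'I_#|A| -> rel A) :
  choice_rule C -> priority_profile p -> lexicographic C p ->
  forall p' : 'I_#|A| -> rel A, priority_profile p' ->
    (lexicographic C p' <->
      ((forall i : 'I_#|A|, val i = 0 -> forall x y, p i x y = p' i x y) /\
       (forall i : 'I_#|A|, forall x y, x \in A_t C i -> y \in A_t C i ->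
          p i x y = p' i x y))).
Proof.
move=> _ hp hlex p' hp'.
have hT : [set: A] != set0 by rewrite -card_gt0 cardsT.
have AtE : forall i : 'I_#|A|, A_t C i = setT :\: lex_choice p setT i.
  move=> i; rewrite /A_t; case: eqP => [->|/eqP i0]; first by rewrite /= setD0.
  by rewrite hlex // lt0n i0 /= ltnW.
split.
- move=> hlex'.
  have E : forall S q, S != set0 -> 0 < q <= #|A| ->
      lex_choice p S q = lex_choice p' S q.
    by move=> S q h1 h2; rewrite -hlex // -hlex'.
  have part2 : forall (i : 'I_#|A|) x y, x \in A_t C i -> y \in A_t C i ->
      p i x y = p' i x y.
    move=> i x y; rewrite AtE => hx hy.
    case: (eqVneq x y) => [<-|nxy].
      by rewrite (pri_refl (hp i)) (pri_refl (hp' i)).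
    set X := lex_choice p setT i in hx hy.
    set S := X :|: [set x; y].
    have xnX : x \notin X by move: hx; rewrite in_setD => /andP [].
    have ynX : y \notin X by move: hy; rewrite in_setD => /andP [].
    have Sn0 : S != set0 by apply/set0Pn; exists x; rewrite !inE eqxx orbT.
    have hXS : lex_choice p S i = X.
      exact: lex_sup hp _ _ (ltnW (ltn_ord i)) (subsetUl _ _).
    have hXS' : lex_choice p' S i = X.
      rewrite -hXS; case: (ltnP 0 i) => [ipos | i0].
        by rewrite E // ipos ltnW.
      have -> : nat_of_ord i = 0 by apply/eqP; rewrite -leqn0.
      by [].
    have hS1 := E S i.+1 Sn0 (ltn_ord i).
    rewrite !lex_choiceS hXS hXS' in hS1.
    have hRxy : forall z, z \in S :\: X -> (z == x) || (z == y).
      by move=> z; rewrite !inE; case: (z \in X).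
    have key : forall r : rel A, priority r ->
        [pick z in S :\: X | [forall w in S :\: X, r z w]] =
        Some (if r x y then x else y).
      move=> r hr0; have rr := pri_refl hr0; case: (hr0) => t _ _.
      apply: (pick_max hr0).
        by case: (r x y); rewrite !inE eqxx ?orbT ?xnX ?ynX.
      move=> w /hRxy /orP [] /eqP ->; case rxy: (r x y) => //.
      by have := t x y; rewrite rxy.
    rewrite !prof_at_ord (key _ (hp i)) (key _ (hp' i)) in hS1.
    move: hS1; case: (p i x y); case: (p' i x y) => // E'.
      have : y \in x |: X by rewrite E' setU11.
      by rewrite in_setU1 (negbTE ynX) orbF eq_sym (negbTE nxy).
    have : x \in y |: X by rewrite E' setU11.
    by rewrite in_setU1 (negbTE xnX) orbF (negbTE nxy).
  split => // i i0 x y; apply: part2; by rewrite /A_t i0 eqxx in_setT.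
- move=> [_ H2] S q hS hq; rewrite hlex //.
  apply: (@lex_eq _ p p' hp); first by case/andP: hq.
  move=> j hj hjq x y hx hy; have := H2 (Ordinal hj) x y; rewrite AtE /=.
  by apply.
Qed.
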